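(* Let $\phi$ be an LTL formula. If some tableau for $\phi$ has a ticked leaf, then $\phi$ is satisfiable. Moreover, this remains true for tableaux in which the PRUNE and PRUNE$_0$ rules are not applied even when applicable, i.e. every ticked branch encodes a model of $\phi$.
   Context: LTL formulas over a countable set $AP$ of atoms are built from atoms $p\in AP$ and the constant $\top$ using $\neg\alpha$, $\alpha\wedge\beta$, $X\alpha$ and $\alpha U\beta$. We write $\bot$ for $\neg\top$. A structure is a triple $(S,R,g)$ where $S$ is a finite set, $R\subseteq S\times S$ is serial (every state has an $R$-successor), and $g:S\to 2^{AP}$. A fullpath is a sequence $\sigma=\langle s_0,s_1,\dots\rangle$ with $(s_i,s_{i+1})\in R$ for all $i$. We write $\sigma_i=s_i$ and $\sigma_{\ge j}=\langle s_j,s_{j+1},\dots\rangle$. Truth is defined as follows: - $\sigma\models p$ iff $p\in g(\sigma_0)$; - $\sigma\models\top$ always; - $\neg$ and $\wedge$ are classical; - $\sigma\models X\alpha$ iff $\sigma_{\ge1}\models\alpha$; - $\sigma\models\alpha U\beta$ iff there is $i\ge0$ with $\sigma_{\ge i}\models\beta$ and $\sigma_{\ge j}\models\alpha$ for all $0\le j<i$. A formula is satisfiable iff it is true on some fullpath of some structure. Tableau. A tableau for $\phi$ is a finite rooted tree. Each node $u$ carries a finite set of formulas $\Gamma_u$ (its label), and the root is labelled $\{\phi\}$. We write $u<v$ when $u$ is a proper ancestor of $v$ and $u\le v$ when it is an ancestor or equal. A formula is elementary if it is an atom, a negated atom, or of the form $X\alpha$ or $\neg X\alpha$. A label is poised if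 it is nonempty, contains no pair $\alpha,\neg\alpha$, and all its formulas are elementary. An $X$-eventuality of a poised label is a member of the form $X(\alpha U\beta)$. Static rules are written ''parent label / children'', where $\{\chi\}\mathbin{\dot\cup}\Delta$ means $\chi\notin\Delta$: - EMPTY: $\{\}$ / tick. - CONTRADICTION: $\{\alpha,\neg\alpha\}\mathbin{\dot\cup}\Delta$ / cross. - $\neg\top$: $\{\neg\top\}\mathbin{\dot\cup}\Delta$ / cross. - $\top$: $\{\top\}\mathbin{\dot\cup}\Delta$ / $\Delta$. - $\wedge$: $\{\alpha\wedge\beta\}\mathbin{\dot\cup}\Delta$ / $\Delta\cup\{\alpha,\beta\}$. - $U$: $\{\alpha U\beta\}\mathbin{\dot\cup}\Delta$ / two children $\Delta\cup\{\beta\}$ and $\Delta\cup\{\alpha,X(\alpha U\beta)\}$. - $\neg\neg$: $\{\neg\neg\alpha\}\mathbin{\dot\cup}\Delta$ / $\Delta\cup\{\alpha\}$. - $\neg\wedge$: $\{\neg(\alpha\wedge\beta)\}\mathbin{\dot\cup}\Delta$ / two children $\Delta\cup\{\neg\alpha\}$ and $\Delta\cup\{\neg\beta\}$. - $\neg U$: $\{\neg(\alpha U\beta)\}\mathbin{\dot\cup}\Delta$ / two children $\Delta\cup\{\neg\alpha,\neg\beta\}$ and $\Delta\cup\{\neg\beta,X\neg(\alpha U\beta)\}$. Non-static rules apply only to a leaf $v$ with poised label. The first applicable one in the following list is used. - LOOP: if some $u<v$ has poised $\Gamma_u\supseteq\Gamma_v$, and for every $X(\alpha U\beta)\in\Gamma_u$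 there is $w$ with $u<w\le v$ and $\beta\in\Gamma_w$, then $v$ is ticked. - PRUNE: if $u<v'<v$ all have the same poised label $\Gamma$, and for every $X(\alpha U\beta)\in\Gamma$, whenever some $x$ with $v'<x\le v$ has $\beta\in\Gamma_x$ there is $y$ with $u<y\le v'$ and $\beta\in\Gamma_y$, then $v$ is crossed. - PRUNE$_0$: if $u<v$ share the same poised label $\Gamma$, $\Gamma$ contains at least one $X$-eventuality, and for no $X(\alpha U\beta)\in\Gamma$ is there $x$ with $u<x\le v$ and $\beta\in\Gamma_x$, then $v$ is crossed. - TRANSITION: otherwise $v$ gets one child labelled $\{\alpha: X\alpha\in\Gamma_v\}\cup\{\neg\alpha:\neg X\alpha\in\Gamma_v\}$. A tableau is constructed from the root by repeatedly choosing any leaf that is neither ticked nor crossed and applying an applicable rule. For non-poised labels this means any applicable static rule to any suitable pivot formula. A tableau is finished if every leaf is ticked or crossed, and successful if some leaf is ticked. *)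

(* Defs.v *)
From Stdlib Require Import List Arith.
Import ListNotations.

Inductive form : Type :=
| Atom : nat -> form
| Top : form
| Neg : form -> form
| And : form -> form -> form
| Next : form -> form
| Until : form -> form -> form.

Definition Bot : form := Neg Top.

Definition suffix {St : Type} (i : nat) (sigma : nat -> St) : nat -> St :=
  fun k => sigma (i + k).

Fixpoint holds {St : Type} (g : St -> nat -> Prop) (sigma : nat -> St) (f : form)
  : Prop :=
  match f with
  | Atom p => g (sigma 0) p
  | Top => True
  | Neg a => ~ holds g sigma a
  | And a b => holds g sigma a /\ holds g sigma b
  | Next a => holds g (suffix 1 sigma) a
  | Until a b => exists i, holds g (suffix i sigma) b /\
                   forall j, j < i -> holds g (suffix j sigma) a
  end.

Definition finite_type (S : Type) : Prop := exists l : list S, forall s, In s l.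
Definition serial {St : Type} (R : St -> St -> Prop) : Prop :=
  forall s, exists t, R s t.
Definition fullpath {St : Type} (R : St -> St -> Prop) (sigma : nat -> St) : Prop :=
  forall i, R (sigma i) (sigma (S i)).

Definition satisfiable (phi : form) : Prop :=
  exists (S : Type) (R : S -> S -> Prop) (g : S -> nat -> Prop),
    finite_type S /\ serial R /\
    exists sigma : nat -> S, fullpath R sigma /\ holds g sigma phi.

(** * Labels: finite sets of formulas, represented by lists
      (compared extensionally, i.e. as sets). *)
Definition label := list form.
Definition set_eq (A B : label) : Prop := forall x, In x A <-> In x B.
Definition subset (A B : label) : Prop := forall x, In x A -> In x B.

Definition elementary (f : form) : Prop :=
  match f with
  | Atom _ => True
  | Neg (Atom _) => True
  | Next _ => True
  | Neg (Next _) => True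
  | _ => False
  end.

Definition poised (G : label) : Prop :=
  G <> [] /\
  (forall a, In a G -> ~ In (Neg a) G) /\
  (forall f, In f G -> elementary f).

Definition rule_child (G : label) (chi : form) (add : list form) (c : label) : Prop :=
  forall x, In x c <-> ((In x G /\ x <> chi) \/ In x add).

Definition static_tick (G : label) : Prop := G = [].

Definition static_cross (G : label) : Prop :=
  (exists a, In a G /\ In (Neg a) G)
  \/ In (Neg Top) G.

Definition static1 (G c : label) : Prop :=
  (In Top G /\ rule_child G Top [] c)
  \/ (exists a b, In (And a b) G /\ rule_child G (And a b) [a; b] c)
  \/ (exists a, In (Neg (Neg a)) G /\ rule_child G (Neg (Neg a)) [a] c).

Definition static2 (G c1 c2 : label) : Prop :=
  (exists a b, In (Until a b) G /\
     rule_child G (Until a b) [b] c1 /\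
     rule_child G (Until a b) [a; Next (Until a b)] c2)
  \/ (exists a b, In (Neg (And a b)) G /\
     rule_child G (Neg (And a b)) [Neg a] c1 /\
     rule_child G (Neg (And a b)) [Neg b] c2)
  \/ (exists a b, In (Neg (Until a b)) G /\
     rule_child G (Neg (Until a b)) [Neg a; Neg b] c1 /\
     rule_child G (Neg (Until a b)) [Neg b; Next (Neg (Until a b))] c2).

(** Non-static rules.  [br] is the branch root..v (labels in order),
    so v has index [length br - 1] =: n, and u < v means index u < n. *)
Definition lab (br : list label) (i : nat) : label := nth i br [].

Definition loop_cond (br : list label) : Prop :=
  let n := length br - 1 in
  exists u, u < n /\ poised (lab br u) /\ subset (lab br n) (lab br u) /\
    forall a b, In (Next (Until a b)) (lab br u) ->
      exists w, u < w /\ w <= n /\ In b (lab br w).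

Definition prune_cond (br : list label) : Prop :=
  let n := length br - 1 in
  exists u v', u < v' /\ v' < n /\ poised (lab br n) /\
    set_eq (lab br u) (lab br n) /\ set_eq (lab br v') (lab br n) /\
    forall a b, In (Next (Until a b)) (lab br n) ->
      (exists x, v' < x /\ x <= n /\ In b (lab br x)) ->
      exists y, u < y /\ y <= v' /\ In b (lab br y).

Definition prune0_cond (br : list label) : Prop :=
  let n := length br - 1 in
  exists u, u < n /\ poised (lab br n) /\ set_eq (lab br u) (lab br n) /\
    (exists a b, In (Next (Until a b)) (lab br n)) /\
    ~ (exists a b x, In (Next (Until a b)) (lab br n) /\
                     u < x /\ x <= n /\ In b (lab br x)).

Definition transition_child (G c : label) : Prop :=
  forall x, In x c <-> (In (Next x) G \/ exists a, x = Neg a /\ In (Neg (Next a)) G).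

(** * Tableaux (partial constructions).  A node is an open (not yet expanded)
    leaf, a ticked leaf, a crossed leaf, or a node with one or two children. *)
Inductive mark : Type := Open | Tick | Cross.

Inductive tree : Type :=
| Leaf : label -> mark -> tree
| Node1 : label -> tree -> tree
| Node2 : label -> tree -> tree -> tree.

Definition root_label (t : tree) : label :=
  match t with Leaf G _ => G | Node1 G _ => G | Node2 G _ _ => G end.

(* [use_prune = true]: the tableau of the paper (first applicable non-static
   rule among LOOP, PRUNE, PRUNE0, TRANSITION).
   [use_prune = false]: PRUNE and PRUNE0 are never applied, i.e. at a poised
   leaf LOOP is used if applicable and TRANSITION otherwise. *)
Definition pruned (use_prune : bool) (br : list label) : Prop :=
  use_prune = true /\ (prune_cond br \/ prune0_cond br).

(* [valid up anc t]: t is correctly built given the labels [anc] of the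
   proper ancestors of its root (listed from the tableau root downward). *)
Fixpoint valid (up : bool) (anc : list label) (t : tree) : Prop :=
  match t with
  | Leaf G Open => True
  | Leaf G Tick =>
      static_tick G \/ (poised G /\ loop_cond (anc ++ [G]))
  | Leaf G Cross =>
      static_cross G \/
      (poised G /\ ~ loop_cond (anc ++ [G]) /\ pruned up (anc ++ [G]))
  | Node1 G t1 =>
      ((~ poised G /\ static1 G (root_label t1)) \/
       (poised G /\ ~ loop_cond (anc ++ [G]) /\ ~ pruned up (anc ++ [G]) /\
        transition_child G (root_label t1)))
      /\ valid up (anc ++ [G]) t1
  | Node2 G t1 t2 =>
      ~ poised G /\ static2 G (root_label t1) (root_label t2) /\
      valid up (anc ++ [G]) t1 /\ valid up (anc ++ [G]) t2
  end.

Definition is_tableau (up : bool) (phi : form) (t : tree) : Prop :=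
  root_label t = [phi] /\ valid up [] t.

Fixpoint has_ticked_leaf (t : tree) : Prop :=
  match t with
  | Leaf _ Tick => True
  | Leaf _ _ => False
  | Node1 _ t1 => has_ticked_leaf t1
  | Node2 _ t1 t2 => has_ticked_leaf t1 \/ has_ticked_leaf t2
  end.

(* Main.v *)
Require Import Defs.
From Stdlib Require Import List Arith Lia Classical ClassicalEpsilon.
Import ListNotations.

Fixpoint fsize (f : form) : nat := match f with
 | Atom _ => 1 | Top => 1 | Neg a => S (fsize a) | And a b => S (fsize a + fsize b)
 | Next a => S (fsize a) | Until a b => S (fsize a + fsize b) end.

Lemma fsize_pos : forall f, 1 <= fsize f.
Proof. destruct f; simpl; lia. Qed.

Lemma holds_transport : forall f (St1 St2 : Type) (g1 : St1 -> nat -> Prop)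
  (g2 : St2 -> nat -> Prop) s1 s2,
  (forall t p, g1 (s1 t) p <-> g2 (s2 t) p) -> (holds g1 s1 f <-> holds g2 s2 f).
Proof.
  induction f; intros St1 St2 g1 g2 s1 s2 H; simpl.
  - apply H.
  - tauto.
  - rewrite (IHf _ _ g1 g2 s1 s2 H). tauto.
  - rewrite (IHf1 _ _ g1 g2 s1 s2 H), (IHf2 _ _ g1 g2 s1 s2 H). tauto.
  - apply IHf. intros; unfold suffix; apply H.
  - split; intros [i [Hb Ha]]; exists i; split.
    + apply (IHf2 _ _ g1 g2 (suffix i s1) (suffix i s2)); [intros; apply H | exact Hb].
    + intros j Hj. apply (IHf1 _ _ g1 g2 (suffix j s1) (suffix j s2)); [intros; apply H | auto].
    + apply (IHf2 _ _ g1 g2 (suffix i s1) (suffix i s2)); [intros; apply H | exact Hb].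
    + intros j Hj. apply (IHf1 _ _ g1 g2 (suffix j s1) (suffix j s2)); [intros; apply H | auto].
Qed.

Definition static_step G c := static1 G c \/ (exists c2, static2 G c c2) \/ (exists c1, static2 G c1 c).
Definition stepR G c := (~ poised G /\ static_step G c) \/ (poised G /\ transition_child G c).

Definition decomp_ok (f : form) (c : label) : Prop := match f with
 | Top => True
 | And a b => In a c /\ In b c
 | Neg (Neg a) => In a c
 | Neg (And a b) => In (Neg a) c \/ In (Neg b) c
 | Until a b => In b c \/ (In a c /\ In (Next (Until a b)) c)
 | Neg (Until a b) => (In (Neg a) c /\ In (Neg b) c) \/
                      (In (Neg b) c /\ In (Next (Neg (Until a b))) c)
 | _ => False end.

Lemma rc_pivot : forall G chi add c f, rule_child G chi add c -> In f G -> ~ In f c ->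
  f = chi /\ forall x, In x add -> In x c.
Proof.
  intros G chi add c f H Hf Hn. split.
  - destruct (classic (f = chi)); auto. exfalso; apply Hn, H; left; auto.
  - intros x Hx; apply H; right; auto.
Qed.

Ltac hadd H := repeat match goal with
 | |- True => exact I
 | |- _ /\ _ => split
 | |- In ?x ?c => apply H; simpl; tauto
 end.

Lemma static_decomp : forall G c f, static_step G c -> In f G -> ~ In f c -> decomp_ok f c.
Proof.
  intros G c f H Hf Hn. unfold static_step, static1, static2 in H.
  destruct H as [[[_ H]|[[a[b[_ H]]]|[a[_ H]]]] |
     [[c2 [[a[b[_[H _]]]]|[[a[b[_[H _]]]]|[a[b[_[H _]]]]]]] |
      [c1 [[a[b[_[_ H]]]]|[[a[b[_[_ H]]]]|[a[b[_[_ H]]]]]]]]];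
  destruct (rc_pivot _ _ _ _ _ H Hf Hn) as [-> Hadd]; simpl;
  first [ solve [hadd Hadd] | solve [left; hadd Hadd] | solve [right; hadd Hadd] ].
Qed.

Lemma elem_nodecomp : forall f c, elementary f -> decomp_ok f c -> False.
Proof.
  intros f c. destruct f as [p| |f|a b|x|a b]; simpl; try tauto.
  destruct f; simpl; tauto.
Qed.

Lemma poised_elem : forall G f, poised G -> In f G -> elementary f.
Proof. intros G f [_ [_ H]] Hf. auto. Qed.

Record BR := mkBR {
  bn : nat; bL : nat -> label; bu : nat;
  bstep : forall i, i < bn -> stepR (bL i) (bL (S i));
  bend : bL bn = [] \/ (poised (bL bn) /\ bu < bn /\ poised (bL bu) /\ subset (bL bn) (bL bu) /\
          forall a b, In (Next (Until a b)) (bL bu) -> exists w, bu < w /\ w <= bn /\ In b (bL w)) }.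

Definition pz (G : label) : nat := if excluded_middle_informative (poised G) then 1 else 0.
Fixpoint T (B : BR) (i : nat) : nat := match i with 0 => 0 | S i' => T B i' + pz (bL B i') end.

Lemma T_p : forall B i, poised (bL B i) -> T B (S i) = S (T B i).
Proof. intros; simpl; unfold pz; destruct (excluded_middle_informative _); [lia|contradiction]. Qed.
Lemma T_np : forall B i, ~ poised (bL B i) -> T B (S i) = T B i.
Proof. intros; simpl; unfold pz; destruct (excluded_middle_informative _); [contradiction|lia]. Qed.
Lemma T_mono : forall B i j, i <= j -> T B i <= T B j.
Proof. intros B i j H; induction H; simpl; lia. Qed.
Lemma T_lt : forall B i j, poised (bL B i) -> i < j -> S (T B i) <= T B j.
Proof. intros. rewrite <- T_p by auto. apply T_mono; lia. Qed.
Lemma T_uniq : forall B i j, poised (bL B i) -> poised (bL B j) -> T B i = T B j -> i = j.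
Proof.
  intros B i j Hi Hj E. destruct (lt_eq_lt_dec i j) as [[H|H]|H]; auto.
  - pose proof (T_lt B i j Hi H); lia.
  - pose proof (T_lt B j i Hj H); lia.
Qed.

Definition K B := T B (bn B).
Definition r B := match bL B (bn B) with [] => K B | _ :: _ => T B (bu B) end.

Fixpoint sg (Kc rc t : nat) : nat := match t with
 | 0 => 0
 | S t' => let s := sg Kc rc t' in if S s <? Kc then S s else rc end.

Lemma sg_small : forall Kc rc t, t < Kc -> sg Kc rc t = t.
Proof.
  intros Kc rc t; induction t; intros H; simpl; auto.
  rewrite IHt by lia. destruct (S t <? Kc) eqn:E; auto. apply Nat.ltb_ge in E; lia.
Qed.
Lemma sg_K : forall Kc rc, 0 < Kc -> sg Kc rc Kc = rc.
Proof.
  intros Kc rc H. destruct Kc; [lia|]. simpl. rewrite sg_small by lia.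
  destruct (S Kc <? S Kc) eqn:E; auto. apply Nat.ltb_lt in E; lia.
Qed.
Lemma sg_shift : forall Kc rc a b, sg Kc rc a = sg Kc rc b -> forall m, sg Kc rc (a + m) = sg Kc rc (b + m).
Proof.
  intros Kc rc a b H m; induction m.
  - rewrite !Nat.add_0_r; auto.
  - rewrite !Nat.add_succ_r. simpl. rewrite IHm. auto.
Qed.
Lemma sg_le : forall Kc rc, rc <= Kc -> forall t, sg Kc rc t <= Kc.
Proof.
  intros Kc rc H t; destruct t; simpl; [lia|].
  destruct (S _ <? Kc) eqn:E; auto. apply Nat.ltb_lt in E; lia.
Qed.

Lemma r_le : forall B, r B <= K B.
Proof.
  intros B. unfold r. pose proof (bend B) as He. destruct (bL B (bn B)) eqn:E; [lia|].
  destruct He as [He|[_ [Hu _]]]; [discriminate|]. unfold K; apply T_mono; lia.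
Qed.

Definition g (B : BR) (s p : nat) : Prop :=
  exists j, j < bn B /\ poised (bL B j) /\ T B j = s /\ In (Atom p) (bL B j).

Definition atT (B : BR) (t : nat) (f : form) : Prop :=
  holds (g B) (suffix t (sg (K B) (r B))) f.

Lemma atT_suffix : forall B t k f,
  holds (g B) (suffix k (suffix t (sg (K B) (r B)))) f <-> atT B (t + k) f.
Proof.
  intros. unfold atT. apply holds_transport. intros. unfold suffix.
  rewrite Nat.add_assoc. tauto.
Qed.

Lemma atT_shift : forall B a b, (forall m, sg (K B) (r B) (a + m) = sg (K B) (r B) (b + m)) ->
  forall c f, atT B (a + c) f <-> atT B (b + c) f.
Proof.
  intros. unfold atT. apply holds_transport. intros. unfold suffix.
  rewrite <- !Nat.add_assoc, H. tauto.
Qed.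

Lemma atT_eq : forall B t1 t2 f, t1 = t2 -> atT B t1 f -> atT B t2 f.
Proof. intros; subst; auto. Qed.

Lemma loop_per : forall B, poised (bL B (bn B)) ->
  forall m, sg (K B) (r B) (K B + m) = sg (K B) (r B) (T B (bu B) + m).
Proof.
  intros B Hp. destruct (bend B) as [E|[_ [Hu [Hpu _]]]].
  - rewrite E in Hp. destruct Hp; congruence.
  - assert (Hr : r B = T B (bu B)).
    { unfold r. destruct (bL B (bn B)) eqn:E; auto. destruct Hp; congruence. }
    assert (HU : S (T B (bu B)) <= K B) by (apply T_lt; auto).
    apply sg_shift. rewrite sg_K by lia. rewrite sg_small by lia. auto.
Qed.
Lemma not_last_step : forall B i, i <= bn B -> ~ poised (bL B i) -> forall f, In f (bL B i) -> i < bn B.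
Proof.
  intros B i Hi Hnp f Hf. destruct (Nat.eq_dec i (bn B)); [|lia]. subst.
  destruct (bend B) as [E|[Hp _]]; [rewrite E in Hf; destruct Hf|contradiction].
Qed.

Lemma block : forall B f d i, bn B - i <= d -> i <= bn B -> In f (bL B i) ->
 (exists j, i <= j /\ j <= bn B /\ T B j = T B i /\ poised (bL B j) /\ In f (bL B j)) \/
 (exists j, i <= j /\ j < bn B /\ T B (S j) = T B i /\ decomp_ok f (bL B (S j))).
Proof.
  intros B f d; induction d; intros i Hd Hi Hf;
  (destruct (classic (poised (bL B i))) as [Hp|Hnp]; [left; exists i; split; [lia|]; split; [lia|]; auto|]);
  pose proof (not_last_step B i Hi Hnp f Hf) as Hlt; [lia|].
  assert (Hst : static_step (bL B i) (bL B (S i))).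
  { destruct (bstep B i Hlt) as [[_ H]|[H _]]; [auto|contradiction]. }
  pose proof (T_np B i Hnp) as HT.
  destruct (classic (In f (bL B (S i)))) as [Hin|Hnin].
  - destruct (IHd (S i)) as [[j Hj]|[j Hj]]; try lia; auto.
    + left; exists j; intuition lia.
    + right; exists j; intuition lia.
  - right; exists i; repeat split; auto. eapply static_decomp; eauto.
Qed.

Lemma trans_at : forall B j, j < bn B -> poised (bL B j) ->
  transition_child (bL B j) (bL B (S j)) /\ T B (S j) = S (T B j).
Proof.
  intros B j Hj Hp. split; [|apply T_p; auto].
  destruct (bstep B j Hj) as [[H _]|[_ H]]; [contradiction|auto].
Qed.

Lemma elem_rep : forall B f i, i <= bn B -> In f (bL B i) -> elementary f ->
  exists j, j < bn B /\ poised (bL B j) /\ In f (bL B j) /\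
    forall m, sg (K B) (r B) (T B i + m) = sg (K B) (r B) (T B j + m).
Proof.
  intros B f i Hi Hf He.
  destruct (block B f (bn B - i) i (le_n _) Hi Hf) as [[j [H1 [H2 [H3 [H4 H5]]]]]|[j [_ [_ [_ H]]]]].
  - destruct (Nat.eq_dec j (bn B)).
    + subst j. pose proof (loop_per B H4) as Hper.
      destruct (bend B) as [E|[_ [Hu [Hpu [Hsub _]]]]]; [rewrite E in H5; destruct H5|].
      exists (bu B). split; [auto|]. split; [auto|]. split; [apply Hsub; auto|].
      intro m. rewrite <- H3. apply Hper.
    + exists j. split; [lia|]. split; [auto|]. split; [auto|]. intro m; rewrite H3; auto.
  - exfalso; eapply elem_nodecomp; eauto.
Qed.

Lemma nonelem_dec : forall B f i, i <= bn B -> In f (bL B i) -> ~ elementary f ->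
  exists j, j < bn B /\ T B (S j) = T B i /\ decomp_ok f (bL B (S j)) /\ i <= j.
Proof.
  intros B f i Hi Hf He.
  destruct (block B f (bn B - i) i (le_n _) Hi Hf) as [[j [H1 [H2 [H3 [H4 H5]]]]]|[j [H1 [H2 [H3 H4]]]]].
  - exfalso; apply He; eapply poised_elem; eauto.
  - exists j; repeat split; auto.
Qed.

Lemma neg_until : forall B a b,
  (forall i, i <= bn B -> In (Neg a) (bL B i) -> ~ atT B (T B i) a) ->
  (forall i, i <= bn B -> In (Neg b) (bL B i) -> ~ atT B (T B i) b) ->
  forall k i, i <= bn B -> In (Neg (Until a b)) (bL B i) ->
    ~ (atT B (T B i + k) b /\ forall j, j < k -> atT B (T B i + j) a).
Proof.
  intros B a b IHa IHb k. induction k; intros i Hi Hin [Hb Ha];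
  destruct (nonelem_dec B _ i Hi Hin) as [j [Hj [HT [Hd _]]]]; try (simpl; tauto);
  simpl in Hd.
  - rewrite Nat.add_0_r in Hb.
    destruct Hd as [[_ Nb]|[Nb _]]; apply (IHb (S j)); try lia; auto; rewrite HT; auto.
  - destruct Hd as [[Na _]|[Nb Hx]].
    + apply (IHa (S j)); try lia; auto. rewrite HT. specialize (Ha 0). rewrite Nat.add_0_r in Ha.
      apply Ha; lia.
    + destruct (elem_rep B _ (S j) ltac:(lia) Hx I) as [j' [Hj' [Hp' [Hx' Hm]]]].
      destruct (trans_at B j' Hj' Hp') as [Htr HT'].
      assert (Hin' : In (Neg (Until a b)) (bL B (S j'))) by (apply Htr; left; auto).
      apply (IHk (S j') ltac:(lia) Hin'). rewrite HT'. split.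
      * apply (atT_eq B (T B j' + S k)); [lia|]. apply (atT_shift B _ _ Hm). rewrite HT; auto.
      * intros j0 Hj0. apply (atT_eq B (T B j' + S j0)); [lia|]. apply (atT_shift B _ _ Hm).
        rewrite HT; apply Ha; lia.
Qed.
Lemma until_chain : forall B a b,
  (forall i, i <= bn B -> In a (bL B i) -> atT B (T B i) a) ->
  (forall i, i <= bn B -> In b (bL B i) -> atT B (T B i) b) ->
  forall d i, bn B - i <= d -> i <= bn B -> In (Until a b) (bL B i) ->
 (exists k, atT B (T B i + k) b /\ forall j, j < k -> atT B (T B i + j) a) \/
 (In (Next (Until a b)) (bL B (bn B)) /\ forall t, T B i <= t <= K B -> atT B t a).
Proof.
  intros B a b IHa IHb d. induction d; intros i Hd Hi Hin;
  destruct (nonelem_dec B _ i Hi Hin) as [j [Hj [HT [Hdc Hij]]]]; try (simpl; tauto);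
  simpl in Hdc.
  - lia.
  - destruct Hdc as [Hb|[Ha Hx]].
    + left; exists 0. split; [|intros; lia]. rewrite Nat.add_0_r, <- HT. apply IHb; auto; lia.
    + assert (Ha0 : atT B (T B i) a) by (rewrite <- HT; apply IHa; auto; lia).
      destruct (block B _ (bn B - S j) (S j) (le_n _) ltac:(lia) Hx)
        as [[j2 [H1 [H2 [H3 [H4 H5]]]]]|[j2 [_ [_ [_ H]]]]]; [|destruct H].
      destruct (Nat.eq_dec j2 (bn B)) as [E|E].
      * right. subst j2. split; auto. intros t Ht. unfold K in Ht.
        assert (t = T B i) by lia. subst; auto.
      * destruct (trans_at B j2 ltac:(lia) H4) as [Htr HT'].
        assert (Hin' : In (Until a b) (bL B (S j2))) by (apply Htr; left; auto).
        destruct (IHd (S j2) ltac:(lia) ltac:(lia) Hin') as [[k [Hk1 Hk2]]|[Hn Hk]].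
        -- left; exists (S k). split.
           ++ apply (atT_eq B (T B (S j2) + k)); [lia|auto].
           ++ intros j0 Hj0. destruct j0.
              ** rewrite Nat.add_0_r; auto.
              ** apply (atT_eq B (T B (S j2) + j0)); [lia|]. apply Hk2; lia.
        -- right; split; auto. intros t Ht.
           destruct (Nat.eq_dec t (T B i)); [subst; auto|]. apply Hk; lia.
Qed.

Lemma until_holds : forall B a b,
  (forall i, i <= bn B -> In a (bL B i) -> atT B (T B i) a) ->
  (forall i, i <= bn B -> In b (bL B i) -> atT B (T B i) b) ->
  forall i, i <= bn B -> In (Until a b) (bL B i) ->
  exists k, atT B (T B i + k) b /\ forall j, j < k -> atT B (T B i + j) a.
Proof.
  intros B a b IHa IHb i Hi Hin.
  destruct (until_chain B a b IHa IHb _ i (le_n _) Hi Hin) as [H|[Hn Hai]]; auto.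
  assert (Hp : poised (bL B (bn B))).
  { destruct (bend B) as [E|[Hp _]]; auto. rewrite E in Hn; destruct Hn. }
  pose proof (loop_per B Hp) as Hper.
  pose proof (atT_shift B _ _ Hper) as Hsh.
  destruct (bend B) as [E|[_ [Hu [Hpu [Hsub Hev]]]]]; [rewrite E in Hn; destruct Hn|].
  set (U := T B (bu B)) in *.
  assert (HTiK : T B i <= K B) by (apply T_mono; auto).
  assert (HUK : S U <= K B) by (apply T_lt; auto).
  destruct (trans_at B (bu B) Hu Hpu) as [Htr HTu].
  assert (Hin' : In (Until a b) (bL B (S (bu B)))) by (apply Htr; left; apply Hsub; auto).
  destruct (until_chain B a b IHa IHb _ (S (bu B)) (le_n _) ltac:(lia) Hin') as [[k [Hk1 Hk2]]|[_ Hk]].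
  - exists (K B - T B i + S k). split.
    + apply (atT_eq B (K B + S k)); [lia|]. apply Hsh.
      apply (atT_eq B (T B (S (bu B)) + k)); [unfold U in *; lia|auto].
    + intros j Hj. destruct (le_lt_dec (T B i + j) (K B)).
      * apply Hai; lia.
      * apply (atT_eq B (K B + S (T B i + j - K B - 1))); [lia|]. apply Hsh.
        apply (atT_eq B (T B (S (bu B)) + (T B i + j - K B - 1))); [unfold U in *; lia|].
        apply Hk2; lia.
  - destruct (Hev a b (Hsub _ Hn)) as [w [Hw1 [Hw2 Hbw]]].
    assert (HTw1 : S U <= T B w) by (apply T_lt; auto).
    assert (HTw2 : T B w <= K B) by (apply T_mono; auto).
    pose proof (IHb w Hw2 Hbw) as Hb.
    exists (K B - T B i + (T B w - U)). split.
    + apply (atT_eq B (K B + (T B w - U))); [lia|]. apply Hsh.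
      apply (atT_eq B (T B w)); [lia|auto].
    + intros j Hj. destruct (le_lt_dec (T B i + j) (K B)).
      * apply Hai; lia.
      * apply (atT_eq B (K B + (T B i + j - K B))); [lia|]. apply Hsh.
        apply Hk; unfold U in *; lia.
Qed.

Lemma main : forall B sz f, fsize f <= sz -> forall i, i <= bn B -> In f (bL B i) -> atT B (T B i) f.
Proof.
  intros B sz. induction sz; intros f Hs i Hi Hin.
  { pose proof (fsize_pos f); lia. }
  destruct f as [p| |f|a b|x|a b].
  - destruct (elem_rep B _ i Hi Hin I) as [j [Hj [Hp [Hj' Hm]]]].
    unfold atT; cbn [holds]; unfold suffix. rewrite (Hm 0), Nat.add_0_r.
    assert (S (T B j) <= K B) by (apply T_lt; auto).
    rewrite sg_small by lia. exists j; auto.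
  - unfold atT; cbn [holds]; auto.
  - destruct f as [p| |f'|a b|x|a b]; simpl in Hs.
    + destruct (elem_rep B _ i Hi Hin I) as [j [Hj [Hp [Hj' Hm]]]].
      unfold atT; cbn [holds]; unfold suffix. rewrite (Hm 0), Nat.add_0_r.
      assert (S (T B j) <= K B) by (apply T_lt; auto).
      rewrite sg_small by lia. intros [j2 [Hj2 [Hp2 [HT2 Ha2]]]].
      assert (j2 = j) by (eapply T_uniq; eauto). subst j2.
      destruct Hp as [_ [Hc _]]. apply (Hc _ Ha2 Hj').
    + exfalso. destruct (nonelem_dec B _ i Hi Hin) as [j [_ [_ [H _]]]]; [simpl; tauto|destruct H].
    + destruct (nonelem_dec B _ i Hi Hin) as [j [Hj [HT [H _]]]]; [simpl; tauto|]. simpl in H.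
      rewrite <- HT. unfold atT; cbn [holds]. intro Hn; apply Hn.
      apply (IHsz f'); auto; lia.
    + destruct (nonelem_dec B _ i Hi Hin) as [j [Hj [HT [H _]]]]; [simpl; tauto|]. simpl in H.
      rewrite <- HT. unfold atT; cbn [holds]. intros [Ha Hb].
      destruct H as [H|H]; [apply (IHsz (Neg a)) in H|apply (IHsz (Neg b)) in H]; simpl; try lia;
      unfold atT in H; cbn [holds] in H; auto.
    + destruct (elem_rep B _ i Hi Hin I) as [j [Hj [Hp [Hj' Hm]]]].
      destruct (trans_at B j Hj Hp) as [Htr HT'].
      assert (Hin' : In (Neg x) (bL B (S j))) by (apply Htr; right; exists x; auto).
      pose proof (IHsz (Neg x) ltac:(simpl; lia) (S j) ltac:(lia) Hin') as H.
      unfold atT in H |- *; cbn [holds] in H |- *. intro Hx. apply H.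
      apply (atT_suffix B (T B i) 1 x) in Hx.
      apply (atT_shift B _ _ Hm) in Hx. change (atT B (T B (S j)) x). rewrite HT'.
      apply (atT_eq B (T B j + 1)); [lia|exact Hx].
    + intros [k [Hb Ha]]. unfold atT in Hb. cbn [holds] in Hb.
      apply (neg_until B a b) with (k := k) (i := i); auto.
      * intros i0 Hi0 H0. apply (IHsz (Neg a) ltac:(simpl; lia) i0 Hi0 H0).
      * intros i0 Hi0 H0. apply (IHsz (Neg b) ltac:(simpl; lia) i0 Hi0 H0).
      * split.
        -- apply atT_suffix; auto.
        -- intros j Hj. apply atT_suffix; auto.
  - destruct (nonelem_dec B _ i Hi Hin) as [j [Hj [HT [H _]]]]; [simpl; tauto|]. simpl in H, Hs.
    rewrite <- HT. destruct H. unfold atT; cbn [holds]. split.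
    + apply (IHsz a); auto; lia.
    + apply (IHsz b); auto; lia.
  - destruct (elem_rep B _ i Hi Hin I) as [j [Hj [Hp [Hj' Hm]]]].
    destruct (trans_at B j Hj Hp) as [Htr HT'].
    assert (Hin' : In x (bL B (S j))) by (apply Htr; left; auto).
    simpl in Hs.
    pose proof (IHsz x ltac:(lia) (S j) ltac:(lia) Hin') as H.
    unfold atT; cbn [holds]. apply (atT_suffix B (T B i) 1 x).
    apply (atT_shift B _ _ Hm). rewrite HT' in H.
    apply (atT_eq B (S (T B j))); [lia|exact H].
  - simpl in Hs.
    destruct (until_holds B a b) with (i := i) as [k [Hb Ha]]; auto.
    + intros i0 Hi0 H0. apply (IHsz a ltac:(lia) i0 Hi0 H0).
    + intros i0 Hi0 H0. apply (IHsz b ltac:(lia) i0 Hi0 H0).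
    + unfold atT; cbn [holds]. exists k. split.
      * apply atT_suffix; auto.
      * intros j Hj. apply atT_suffix; auto.
Qed.
Definition chainok (ls : list label) : Prop :=
  forall i, S i < length ls -> stepR (nth i ls []) (nth (S i) ls []).
Definition finalok (br : list label) : Prop :=
  static_tick (lab br (length br - 1)) \/ (poised (lab br (length br - 1)) /\ loop_cond br).

Lemma lab_last : forall anc (G : label), lab (anc ++ [G]) (length (anc ++ [G]) - 1) = G.
Proof.
  intros. unfold lab. rewrite length_app. simpl.
  replace (length anc + 1 - 1) with (length anc) by lia. apply nth_middle.
Qed.

Lemma extract : forall up t anc, valid up anc t -> has_ticked_leaf t ->
  exists ls, ls <> [] /\ nth 0 ls [] = root_label t /\ chainok ls /\ finalok (anc ++ ls).
Proof.
  intros up t. induction t as [G m|G t1 IH|G t1 IH1 t2 IH2]; intros anc Hv Ht.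
  - destruct m; simpl in Ht; try tauto. exists [G]. split; [congruence|]. split; [auto|].
    split. { intros i Hi; simpl in Hi; lia. }
    unfold finalok. rewrite lab_last. simpl in Hv. exact Hv.
  - simpl in Hv, Ht. destruct Hv as [Hs Hv].
    destruct (IH (anc ++ [G]) Hv Ht) as [ls [Hne [H0 [Hc Hf]]]].
    exists (G :: ls). split; [congruence|]. split; [auto|]. split.
    + intros [|i] Hi; simpl.
      * rewrite <- H0 in Hs. destruct ls; [congruence|]. simpl in *.
        destruct Hs as [[Hnp Hs]|[Hp [_ [_ Htr]]]]; [left; split; auto; left; auto|right; auto].
      * apply Hc. simpl in Hi; lia.
    + replace (anc ++ G :: ls) with ((anc ++ [G]) ++ ls) by (rewrite <- app_assoc; reflexivity). auto.
  - simpl in Hv, Ht. destruct Hv as [Hnp [Hs [Hv1 Hv2]]].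
    destruct Ht as [Ht|Ht];
    [destruct (IH1 (anc ++ [G]) Hv1 Ht) as [ls [Hne [H0 [Hc Hf]]]]
    |destruct (IH2 (anc ++ [G]) Hv2 Ht) as [ls [Hne [H0 [Hc Hf]]]]];
    exists (G :: ls); (split; [congruence|]); (split; [auto|]); split;
    try (replace (anc ++ G :: ls) with ((anc ++ [G]) ++ ls) by (rewrite <- app_assoc; reflexivity); auto);
    intros [|i] Hi; simpl; try (apply Hc; simpl in Hi; lia);
    destruct ls; try congruence; simpl in H0; subst; left; split; auto; right.
    + left; eexists; eauto.
    + right; eexists; eauto.
Qed.

Lemma fin_sig : forall N, finite_type {k | k <= N}.
Proof.
  intro N.
  exists (flat_map (fun k => match le_dec k N with left h => [exist (fun k => k <= N) k h] | right _ => [] end)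
            (seq 0 (S N))).
  intros [k h]. apply in_flat_map. exists k. split; [apply in_seq; lia|].
  destruct (le_dec k N) as [h'|h']; [|lia]. left. f_equal. apply le_unique.
Qed.

Theorem mainTheorem2 :
  forall (up : bool) (phi : form) (t : tree),
    is_tableau up phi t -> has_ticked_leaf t -> satisfiable phi.
Proof.
  intros up phi t [Hr Hv] Ht.
  destruct (extract up t [] Hv Ht) as [ls [Hne [H0 [Hc Hf]]]].
  simpl in Hf. rewrite Hr in H0.
  assert (Hst : forall i, i < length ls - 1 -> stepR (nth i ls []) (nth (S i) ls [])).
  { intros i Hi. apply Hc. destruct ls; [congruence|]. simpl length in *. unfold label in *. lia. }
  assert (HB : exists B : BR, bn B = length ls - 1 /\ bL B = fun i => nth i ls []).
  { destruct Hf as [Htk|[Hp [u [Hu [Hpu [Hsub Hev]]]]]].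
    - exists (mkBR (length ls - 1) (fun i => nth i ls []) 0 Hst (or_introl Htk)). auto.
    - exists (mkBR (length ls - 1) (fun i => nth i ls []) u Hst
               (or_intror (conj Hp (conj Hu (conj Hpu (conj Hsub Hev)))))). auto. }
  destruct HB as [B [Hbn HbL]].
  assert (Hphi : atT B (T B 0) phi).
  { apply (main B (fsize phi) phi (le_n _) 0); [lia|]. rewrite HbL, H0. left; auto. }
  exists {k | k <= K B}, (fun _ _ => True), (fun s p => g B (proj1_sig s) p).
  split; [apply fin_sig|]. split; [intro s; exists s; auto|].
  exists (fun t => exist (fun k => k <= K B) (sg (K B) (r B) t) (sg_le _ _ (r_le B) t)).
  split; [intro; auto|].
  apply (holds_transport phi _ _ _ (g B) _ (suffix 0 (sg (K B) (r B)))).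
  - intros; simpl; tauto.
  - exact Hphi.
Qed.
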